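(* For every integer $n\ge 1$, the restriction to $\mathfrak{sl}(n+1)$ of the functional $$F_n=\sum_{i=1}^{n}\sum_{j=1}^{n+1-i}e_{i,j}^*$$ (a sum of coordinate functionals on $(n+1)\times(n+1)$ matrices, all strictly above the antidiagonal) is regular on $A_n=\mathfrak{sl}(n+1)$, i.e. the kernel of its Kirillov form on $\mathfrak{sl}(n+1)$ has dimension $n$.
   Context: Over $\mathbb{C}$. $e_{i,j}^*(X)=X_{i,j}$. For a Lie algebra $\mathfrak{g}$ and $f\in\mathfrak{g}^*$, $B_f(x,y)=f([x,y])$, $\ker(B_f)=\{x\in\mathfrak{g}: f([x,y])=0\ \forall y\in\mathfrak{g}\}$, and $f$ is regular if $\dim\ker(B_f)=\operatorname{ind}\mathfrak{g}:=\min_{g\in\mathfrak{g}^*}\dim\ker(B_g)$. It is known that $\operatorname{ind}\mathfrak{sl}(n+1)=n$. *)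

(* Defs.v *)
From HB Require Import structures.
From mathcomp Require Import all_boot all_order all_algebra.
Set Implicit Arguments. Unset Strict Implicit. Unset Printing Implicit Defensive.
Import GRing.Theory Num.Theory.
Local Open Scope ring_scope.

Definition in_sl (C : fieldType) (m : nat) (X : 'M[C]_m) : Prop := \tr X = 0.

Definition lie_br (C : fieldType) (m : nat) (X Y : 'M[C]_m) : 'M[C]_m :=
  X *m Y - Y *m X.

Definition kirillov_ker_sl (C : fieldType) (m : nat) (f : 'M[C]_m -> C)
    (X : 'M[C]_m) : Prop :=
  in_sl X /\ forall Y : 'M[C]_m, in_sl Y -> f (lie_br X Y) = 0.

(* F_n = sum_{i=1}^{n} sum_{j=1}^{n+1-i} e_{i,j}^*  on (n+1)x(n+1) matrices.
   With 0-based indices i', j' (i = i'+1, j = j'+1) the condition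
   1 <= i <= n, 1 <= j <= n+1-i  becomes  i' + j' < n. *)
Definition F_fun (C : fieldType) (n : nat) (A : 'M[C]_n.+1) : C :=
  \sum_(i < n.+1) \sum_(j < n.+1 | (i + j < n)%N) A i j.

(* Main.v *)
Require Import Defs.
From HB Require Import structures.
From mathcomp Require Import all_boot all_order all_algebra zify.
Import GRing.Theory Num.Theory.
Local Open Scope ring_scope.

Section P.
Variable C : numClosedFieldType.
Variable n : nat.
Hypothesis hn : (0 < n)%N.
Local Notation MT := 'M[C]_n.+1.

Lemma sum_ind (f : 'I_n.+1 -> C) (k : 'I_n.+1) :
  \sum_(c < n.+1) (c == k)%:R * f c = f k.
Proof.
rewrite (bigD1 k) //= eqxx mul1r big1 ?addr0 // => c /negbTE ->; by rewrite mul0r.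
Qed.

Lemma tr_delta (A : MT) i j : \tr (delta_mx i j *m A) = A j i.
Proof.
rewrite /mxtrace (bigD1 i) //= big1 ?addr0.
  rewrite mxE (bigD1 j) //= big1 ?addr0; first by rewrite mxE !eqxx mul1r.
  by move=> l /negbTE hl; rewrite mxE hl andbF mul0r.
move=> k /negbTE hk; rewrite mxE big1 // => l _; by rewrite mxE hk mul0r.
Qed.

Lemma trB (A B : MT) : \tr (A - B) = \tr A - \tr B.
Proof. exact: raddfB. Qed.
Lemma tr0 : \tr (0 : MT) = 0.
Proof. exact: raddf0. Qed.

Lemma tr_delta1 i : \tr (delta_mx i i : MT) = 1.
Proof. by rewrite -[delta_mx i i]mulmx1 tr_delta mxE eqxx. Qed.

Definition Mm : MT := \matrix_(i, j) ((i + j < n)%N)%:R.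

Lemma FE A : F_fun A = \tr (A *m Mm).
Proof.
rewrite /F_fun /mxtrace; apply: eq_bigr => i _; rewrite mxE big_mkcond /=.
apply: eq_bigr => j _; rewrite mxE addnC; case: ifP => _; by rewrite ?mulr1 ?mulr0.
Qed.

Lemma ker_iff X : kirillov_ker_sl (@F_fun C n) X <-> \tr X = 0 /\ X *m Mm = Mm *m X.
Proof.
have key : forall Y : MT, F_fun (lie_br X Y) = \tr (Y *m (Mm *m X - X *m Mm)).
  move=> Y; rewrite FE /lie_br mulmxBl trB mulmxBr trB.
  by rewrite -mulmxA mxtrace_mulC -mulmxA -[Y *m X *m Mm]mulmxA.
split.
  case=> htr hY; split => //.
  set D := Mm *m X - X *m Mm.
  have hD : forall Y : MT, \tr Y = 0 -> \tr (Y *m D) = 0 by move=> Y hy; rewrite -key hY.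
  have off : forall i j, i != j -> D i j = 0.
    move=> i j hij; rewrite -tr_delta hD // /mxtrace big1 // => k _.
    rewrite mxE; apply/eqP; rewrite pnatr_eq0 eqb0; apply/negP => /andP [/eqP -> /eqP e].
    by rewrite e eqxx in hij.
  have dg : forall i, D i i = D 0 0.
    move=> i; apply/eqP; rewrite -subr_eq0 -(tr_delta D i i) -(tr_delta D 0 0) -trB -mulmxBl.
    apply/eqP; apply: hD; by rewrite trB !tr_delta1 subrr.
  have trD : \tr D = 0 by rewrite /D trB mxtrace_mulC subrr.
  have D00 : D 0 0 = 0.
    move: trD; rewrite /mxtrace (eq_bigr (fun _ => D 0 0)) ?sumr_const ?card_ord; last by move=> i _; exact: dg.
    move/eqP; rewrite -mulr_natl mulf_eq0 pnatr_eq0 /= => /eqP //.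
  have D0 : D = 0.
    apply/matrixP => i j; rewrite [in RHS]mxE; case: (eqVneq i j) => [->|/off //]; by rewrite dg.
  by apply/esym/eqP; rewrite -subr_eq0 -/D D0.
case=> htr hc; split => // Y _; by rewrite key hc subrr mulmx0 tr0.
Qed.


Definition Tm : MT := \matrix_(i, j) ((((i + j).+1 == n)%N)%:R - [&& (i < n)%N, (j < n)%N & (i + j == n)%N]%:R).
Definition Em : MT := diag_mx (\row_i ((i < n)%N)%:R).

Lemma sum_pick2 (P : pred 'I_n.+1) (f : 'I_n.+1 -> C) k : (k < n.+1)%N ->
  (forall c : 'I_n.+1, P c = ((c:nat) == k)) -> \sum_c f c * (P c)%:R = f (inord k).
Proof.
move=> hk hP; rewrite (bigD1 (inord k)) //= hP inordK // eqxx mulr1 big1 ?addr0 //.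
move=> c hc; rewrite hP; case: eqP => e; last by rewrite mulr0.
by move: hc; rewrite -e inord_val eqxx.
Qed.

Lemma sum_none (P : pred 'I_n.+1) (f : 'I_n.+1 -> C) :
  (forall c : 'I_n.+1, P c = false) -> \sum_c f c * (P c)%:R = 0.
Proof. by move=> hP; rewrite big1 // => c _; rewrite hP mulr0. Qed.

Lemma MT_E : Mm *m Tm = Em.
Proof.
apply/matrixP => a b; rewrite [LHS]mxE [RHS]mxE [X in X *+ _]mxE -val_eqE /=.
under eq_bigr => c _ do rewrite !mxE mulrBr.
rewrite sumrB.
have ha := ltn_ord a; have hb' := ltn_ord b.
case: (ltnP b n) => hb.
  rewrite (@sum_pick2 _ _ (n.-1 - b)%N); first last.
  - by move=> c; apply/eqP/eqP; lia.
  - lia.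
  rewrite inordK; last lia.
  case: (posnP b) => hb0.
    rewrite sum_none; last first.
      by move=> c; apply/negbTE/and3P; case; lia.
    rewrite subr0; case: (posnP a) => ha0.
      rewrite (_ : (a == b :> nat) = true); last by apply/eqP; lia.
      rewrite mulr1n (_ : (a < n)%N = true); last lia.
      by rewrite (_ : (a + (n.-1 - b) < n)%N = true) //; lia.
    rewrite (_ : (a == b :> nat) = false); last by apply/negbTE/eqP; lia.
    by rewrite mulr0n (_ : (a + (n.-1 - b) < n)%N = false) //; apply/negbTE; lia.
  rewrite (@sum_pick2 _ _ (n - b)%N); first last.
  - by move=> c; apply/and3P/eqP; [case=> *; lia | move=> e; split; lia].
  - lia.
  rewrite inordK; last lia.
  case: (ltngtP a b) => hab.
  - idtac.
    rewrite (_ : (a + (n.-1 - b) < n)%N = true); last lia.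
    rewrite (_ : (a + (n - b) < n)%N = true) ?subrr //; lia.
  - idtac.
    rewrite (_ : (a + (n.-1 - b) < n)%N = false); last by apply/negbTE; lia.
    rewrite (_ : (a + (n - b) < n)%N = false) ?subrr //; apply/negbTE; lia.
  - rewrite mulr1n.
    rewrite (_ : (a + (n.-1 - b) < n)%N = true); last lia.
    rewrite (_ : (a + (n - b) < n)%N = false) ?subr0; last by apply/negbTE; lia.
    rewrite (_ : (a < n)%N = true) //; lia.
rewrite !sum_none ?subrr.
- case: (ltnP a n) => han; last by rewrite /= mul0rn.
  rewrite (_ : (a == b :> nat) = false) //; apply/negbTE/eqP; lia.
- by move=> c; apply/negbTE/and3P; case; lia.
- by move=> c; apply/negbTE/eqP; lia.
Qed.


Lemma Mm_tr : Mm^T = Mm.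
Proof. by apply/matrixP => i j; rewrite !mxE addnC. Qed.
Lemma Tm_tr : Tm^T = Tm.
Proof. by apply/matrixP => i j; rewrite !mxE addnC andbCA. Qed.
Lemma TM_E : Tm *m Mm = Em.
Proof. by rewrite -Mm_tr -Tm_tr -trmx_mul MT_E /Em tr_diag_mx. Qed.

Lemma Tm_last (i : 'I_n.+1) : Tm i ord_max = 0.
Proof.
rewrite mxE (_ : ((i + n).+1 == n) = false); last by apply/negbTE; lia.
by rewrite (_ : (ord_max < n)%N = false) ?andbF ?subrr //= ltnn.
Qed.
Lemma Tm_last' (i : 'I_n.+1) : Tm ord_max i = 0.
Proof. by rewrite -Tm_tr mxE Tm_last. Qed.

Lemma TE : Tm *m Em = Tm.
Proof.
apply/matrixP => i j; rewrite mul_mx_diag mxE [_ 0 j]mxE.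
case: (ltnP j n) => hj; first by rewrite mulr1.
have -> : j = ord_max by apply/val_inj => /=; have := ltn_ord j; lia.
by rewrite Tm_last mul0r.
Qed.
Lemma ET : Em *m Tm = Tm.
Proof. by rewrite -Tm_tr /Em -tr_diag_mx -trmx_mul TE. Qed.

Lemma Mm_row (A : MT) (j : 'I_n.+1) : (Mm *m A) ord_max j = 0.
Proof. by rewrite mxE big1 // => l _; rewrite mxE (_ : (ord_max + l < n)%N = false) ?mul0r //=; apply/negbTE; lia. Qed.
Lemma Mm_col (A : MT) (j : 'I_n.+1) : (A *m Mm) j ord_max = 0.
Proof. by rewrite mxE big1 // => l _; rewrite mxE (_ : (l + ord_max < n)%N = false) ?mulr0 //=; apply/negbTE; lia. Qed.

Section Comm.
Variable X : MT.
Hypothesis hX : X *m Mm = Mm *m X.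

Lemma cX_row (j : 'I_n.+1) : (j < n)%N -> X ord_max j = 0.
Proof.
move=> hj; have : (X *m Em) ord_max j = X ord_max j by rewrite mul_mx_diag !mxE hj mulr1.
by rewrite -MT_E mulmxA hX -mulmxA Mm_row => <-.
Qed.
Lemma cX_col (j : 'I_n.+1) : (j < n)%N -> X j ord_max = 0.
Proof.
move=> hj; have : (Em *m X) j ord_max = X j ord_max by rewrite mul_diag_mx !mxE hj mul1r.
by rewrite -TM_E -mulmxA -hX mulmxA Mm_col => <-.
Qed.
Lemma cX_E : X *m Em = Em *m X.
Proof.
apply/matrixP => i j; rewrite mul_mx_diag mul_diag_mx !mxE.
case: (ltnP i n) => hi; case: (ltnP j n) => hj; rewrite ?mulr1 ?mul1r ?mulr0 ?mul0r //.
- have -> : j = ord_max by apply/val_inj => /=; have := ltn_ord j; lia.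
  by rewrite cX_col.
- have -> : i = ord_max by apply/val_inj => /=; have := ltn_ord i; lia.
  by rewrite cX_row.
Qed.
Lemma cX_T : X *m Tm = Tm *m X.
Proof.
rewrite -{2}TE -mulmxA -cX_E -MT_E [X *m (Mm *m Tm)]mulmxA hX.
by rewrite -[Mm *m X *m Tm]mulmxA mulmxA TM_E mulmxA -cX_E -mulmxA ET.
Qed.
End Comm.

Definition u j : 'rV[C]_n.+1 := row 0 (Tm ^+ j).

Lemma uS j (i : 'I_n.+1) : u j.+1 0 i = \sum_c u j 0 c * Tm c i.
Proof. by rewrite /u exprSr -mulmxE row_mul mxE. Qed.

Lemma u0 (i : 'I_n.+1) : u 0 0 i = ((i : nat) == 0%N)%:R.
Proof. by rewrite /u expr0 !mxE eq_sym. Qed.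

Lemma uN j : u j 0 ord_max = 0.
Proof.
case: j => [|j]; first by rewrite u0 (_ : (n == 0)%N = false) //; apply/negbTE; lia.
by rewrite uS big1 // => c _; rewrite Tm_last mulr0.
Qed.

Lemma stepA k (H : forall c : 'I_n.+1, (k < c)%N -> u k.*2 0 c = 0) (i : 'I_n.+1) :
  (i.+1 + k < n)%N -> u k.*2.+1 0 i = 0.
Proof.
move=> hi; rewrite uS big1 // => c _; case: (ltnP k c) => hc; first by rewrite H ?mul0r.
rewrite [Tm _ _]mxE (_ : (((c + i).+1 == n)%N) = false); last by apply/negbTE; lia.
by rewrite (_ : ((c + i == n)%N) = false) ?andbF ?subrr ?mulr0 //; apply/negbTE; lia.
Qed.

Lemma stepB k (H : forall c : 'I_n.+1, (c.+1 + k < n)%N -> u k.*2.+1 0 c = 0) (i : 'I_n.+1) :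
  (k.+1 < i)%N -> u k.+1.*2 0 i = 0.
Proof.
move=> hi; rewrite doubleS uS big1 // => c _; case: (ltnP (c.+1 + k) n) => hc; first by rewrite H ?mul0r.
rewrite [Tm _ _]mxE (_ : (((c + i).+1 == n)%N) = false); last by apply/negbTE; lia.
by rewrite (_ : ((c + i == n)%N) = false) ?andbF ?subrr ?mulr0 //; apply/negbTE; lia.
Qed.

Lemma Z12 k : (forall i : 'I_n.+1, (k < i)%N -> u k.*2 0 i = 0) /\
              (forall i : 'I_n.+1, (i.+1 + k < n)%N -> u k.*2.+1 0 i = 0).
Proof.
elim: k => [|k [IH1 IH2]].
  have Z0 : forall i : 'I_n.+1, (0 < i)%N -> u 0.*2 0 i = 0.
    by move=> i hi; rewrite u0 (_ : ((i : nat) == 0%N) = false) //; apply/negbTE; lia.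
  by split => //; apply: stepA.
have Z1 := @stepB k IH2.
by split => //; apply: stepA.
Qed.

Lemma ne_nat (c : 'I_n.+1) k : (k < n.+1)%N -> c != inord k -> (c : nat) <> k.
Proof. by move=> hk hc e; move/eqP: hc; apply; apply/val_inj; rewrite /= inordK. Qed.

Lemma stepC k (hk : (k < n)%N) (H1 : u k.*2 0 (inord k) = (-1)^+k) :
  u k.*2.+1 0 (inord (n.-1 - k)) = (-1)^+k.
Proof.
have [Z _] := Z12 k.
rewrite uS (bigD1 (inord k)) //= H1 big1 ?addr0.
  rewrite [Tm _ _]mxE !inordK; try lia.
  rewrite (_ : (((k + (n.-1 - k)).+1 == n)%N) = true); last by apply/eqP; lia.
  by rewrite (_ : ((k + (n.-1 - k) == n)%N) = false) ?andbF ?subr0 ?mulr1 //; apply/negbTE; lia.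
move=> c hc; have hc' : (c : nat) <> k by apply: ne_nat hc; lia.
case: (ltnP k c) => hkc; first by rewrite Z ?mul0r.
rewrite [Tm _ _]mxE inordK; last lia.
rewrite (_ : (((c + (n.-1 - k)).+1 == n)%N) = false); last by apply/negbTE; lia.
by rewrite (_ : ((c + (n.-1 - k) == n)%N) = false) ?andbF ?subrr ?mulr0 //; apply/negbTE; lia.
Qed.

Lemma stepD k (hk : (k.+1 < n)%N) (H2 : u k.*2.+1 0 (inord (n.-1 - k)) = (-1)^+k) :
  u k.+1.*2 0 (inord k.+1) = (-1)^+k.+1.
Proof.
have [_ Z] := Z12 k.
rewrite doubleS uS (bigD1 (inord (n.-1 - k))) //= H2 big1 ?addr0.
  rewrite [Tm _ _]mxE !inordK; try lia.
  rewrite (_ : (((n.-1 - k + k.+1).+1 == n)%N) = false); last by apply/negbTE; lia.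
  rewrite (_ : [&& (n.-1 - k < n)%N, (k.+1 < n)%N & (n.-1 - k + k.+1 == n)%N] = true); last first.
    by apply/and3P; split; try lia; apply/eqP; lia.
  by rewrite exprS sub0r mulrN1 mulN1r.
move=> c hc; have hc' : (c : nat) <> (n.-1 - k)%N by apply: ne_nat hc; lia.
case: (ltnP (c.+1 + k) n) => hkc; first by rewrite Z ?mul0r.
rewrite [Tm _ _]mxE inordK; last lia.
rewrite (_ : (((c + k.+1).+1 == n)%N) = false); last by apply/negbTE; lia.
by rewrite (_ : ((c + k.+1 == n)%N) = false) ?andbF ?subrr ?mulr0 //; apply/negbTE; lia.
Qed.

Lemma C12 k : (k < n)%N -> and (u k.*2 0 (inord k) = (-1)^+k) (u k.*2.+1 0 (inord (n.-1 - k)) = (-1)^+k).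
Proof.
elim: k => [|k IH] hk.
  have h0 : u 0.*2 0 (inord 0) = (-1)^+0 by rewrite u0 inordK.
  by split => //; apply: stepC.
have [_ h2] := IH (ltnW hk).
have h1 := @stepD k hk h2.
by split => //; apply: stepC.
Qed.

Lemma Kry (X : MT) : (forall j, (j < n)%N -> u j *m X = 0) ->
  forall (i c : 'I_n.+1), (i < n)%N -> X i c = 0.
Proof.
move=> hX.
have hE : forall j c, (j < n)%N -> \sum_i u j 0 i * X i c = 0.
  by move=> j c hj; have := congr1 (fun A : 'rV[C]_n.+1 => A 0 c) (hX j hj); rewrite !mxE.
suff A : forall k (i : 'I_n.+1), (i < n)%N -> ((i < k) || (n <= i + k))%N -> forall c, X i c = 0.
  by move=> i c hi; apply: (A n) => //; rewrite hi.
elim=> [|k IH] i hi hik c.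
  by exfalso; move: hik; rewrite ltn0 /= addn0 leqNgt hi.
case: (leqP n k.*2) => hk2.
  by apply: IH => //; apply/orP; lia.
have hk : (k < n)%N by lia.
have rowk : forall c, X (inord k) c = 0.
  move=> c0; have := hE k.*2 c0 hk2; rewrite (bigD1 (inord k)) //= (@C12 k hk).1 big1 ?addr0.
    by move/eqP; rewrite mulf_eq0 signr_eq0 => /eqP.
  move=> i0 hi0; have hne : (i0 : nat) <> k by apply: ne_nat hi0; lia.
  case: (ltnP k i0) => h; first by rewrite (Z12 k).1 ?mul0r.
  by rewrite IH ?mulr0 //; [lia | apply/orP; lia].
have rowk' : forall c, X (inord (n.-1 - k)) c = 0.
  case: (eqVneq k.*2.+1 n) => e.
    by have -> : inord (n.-1 - k) = inord k :> 'I_n.+1 by congr inord; lia.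
  move=> c0; have := hE k.*2.+1 c0 ltac:(lia).
  rewrite (bigD1 (inord (n.-1 - k))) //= (@C12 k hk).2 big1 ?addr0.
    by move/eqP; rewrite mulf_eq0 signr_eq0 => /eqP.
  move=> i0 hi0; have hne : (i0 : nat) <> (n.-1 - k)%N by apply: ne_nat hi0; lia.
  case: (ltnP (i0.+1 + k) n) => h; first by rewrite (Z12 k).2 ?mul0r.
  case: (ltnP i0 n) => h'.
    by rewrite IH ?mulr0 //; apply/orP; lia.
  have -> : i0 = ord_max by apply/val_inj => /=; have := ltn_ord i0; lia.
  by rewrite uN mul0r.
case: (boolP ((i < k) || (n <= i + k))%N) => h; first by apply: IH.
case: (eqVneq (i : nat) k) => e.
  by have -> : i = inord k by apply/val_inj; rewrite /= inordK; lia.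
have -> : i = inord (n.-1 - k) by apply/val_inj; rewrite /= inordK; move: h hik; rewrite negb_or => /andP [h1 h2] /orP; lia.
exact: rowk'.
Qed.

Definition Km : MT := \matrix_(i, c) (if (i < n)%N then u i 0 c else (c == ord_max)%:R).

Lemma K_inj (Y : MT) : Km *m Y = 0 -> Y = 0.
Proof.
move=> hY.
have hr : forall c, Y ord_max c = 0.
  move=> c; have := congr1 (fun A : MT => A ord_max c) hY; rewrite !mxE.
  under eq_bigr => l _ do rewrite mxE ltnn.
  by rewrite sum_ind.
have hu : forall j, (j < n)%N -> u j *m Y = 0.
  move=> j hj; apply/rowP => c; have := congr1 (fun A : MT => A (inord j) c) hY.
  rewrite !mxE => e; rewrite -[in RHS]e.
  by apply: eq_bigr => l _; rewrite [Km _ _]mxE inordK ?hj //; lia.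
apply/matrixP => i c; rewrite mxE; case: (ltnP i n) => hi; first exact: Kry.
have -> : i = ord_max by apply/val_inj => /=; have := ltn_ord i; lia.
exact: hr.
Qed.

Lemma K_unit : Km \in unitmx.
Proof. by rewrite -row_full_unit -cokermx_eq0; apply/eqP/K_inj; exact: mulmx_coker. Qed.

Definition Fm : MT := delta_mx ord_max ord_max.
Definition Bf (l : 'I_n) : MT := Tm ^+ l - \tr (Tm ^+ l) *: Fm.
Definition Bt := [tuple Bf l | l < n].

Lemma trZ (a : C) (A : MT) : \tr (a *: A) = a * \tr A.
Proof. by rewrite /mxtrace mulr_sumr; apply: eq_bigr => i _; rewrite mxE. Qed.
Lemma tr_sum (F : 'I_n -> MT) : \tr (\sum_i F i) = \sum_i \tr (F i).
Proof. exact: raddf_sum. Qed.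


Lemma FM : Fm *m Mm = 0.
Proof.
apply/matrixP => i j; rewrite !mxE big1 // => l _; rewrite !mxE.
case: (eqVneq l ord_max) => [->|hl]; last by rewrite andbF mul0r.
by rewrite (_ : (ord_max + j < n)%N = false) ?mulr0 //=; apply/negbTE; lia.
Qed.
Lemma MF : Mm *m Fm = 0.
Proof.
apply/matrixP => i j; rewrite !mxE big1 // => l _; rewrite !mxE.
case: (eqVneq l ord_max) => [->|hl]; last by rewrite mulr0.
by rewrite (_ : (i + ord_max < n)%N = false) ?mul0r //=; apply/negbTE; lia.
Qed.

Lemma TMc : GRing.comm (Mm : MT) Tm.
Proof. by rewrite /GRing.comm -!mulmxE MT_E TM_E. Qed.

Lemma Bf_good l : \tr (Bf l) = 0 /\ Bf l *m Mm = Mm *m Bf l.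
Proof.
split; first by rewrite /Bf trB trZ /Fm tr_delta1 mulr1 subrr.
rewrite /Bf mulmxBl mulmxBr -!scalemxAl -scalemxAr FM MF.
have := commrX l TMc; rewrite /GRing.comm -!mulmxE => ->. done.
Qed.

Lemma good_sum (k : 'I_n -> C) : let X := \sum_i k i *: Bf i in
  \tr X = 0 /\ X *m Mm = Mm *m X.
Proof.
move=> X; split.
  by rewrite /X tr_sum big1 // => i _; rewrite trZ (Bf_good i).1 mulr0.
rewrite /X mulmx_suml mulmx_sumr; apply: eq_bigr => i _.
by rewrite -scalemxAl -scalemxAr (Bf_good i).2.
Qed.

Lemma Bt_nth (i : 'I_n) : Bt`_i = Bf i.
Proof. by rewrite -tnth_nth tnth_mktuple. Qed.

Lemma Fm_row0 c : Fm 0 c = 0.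
Proof. by rewrite mxE (_ : (0 == ord_max :> 'I_n.+1) = false) //; apply/negbTE; rewrite -val_eqE /=; lia. Qed.

Lemma uE j c : u j 0 c = (Tm ^+ j) 0 c.
Proof. by rewrite mxE. Qed.

Lemma dK (d : 'rV[C]_n.+1) c : (d *m Km) 0 c =
  \sum_(i < n) d 0 (widen_ord (leqnSn n) i) * u i 0 c + d 0 ord_max * (c == ord_max)%:R.
Proof.
rewrite mxE big_ord_recr /=; congr (_ + _); last by rewrite mxE ltnn.
by apply: eq_bigr => i _; rewrite mxE /= ltn_ord.
Qed.

Lemma Bt_free : free Bt.
Proof.
apply/freeP => k hk.
have hrow : forall c, \sum_i k i * u i 0 c = 0.
  move=> c; have e := congr1 (fun A : MT => A 0 c) hk; rewrite /= summxE mxE in e; rewrite -[in RHS]e.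
  apply: eq_bigr => i _; rewrite Bt_nth uE [RHS]mxE; congr (_ * _); rewrite /Bf mxE. by rewrite [X in _ + X]mxE [X in - X]mxE Fm_row0 mulr0 oppr0 addr0.

pose d : 'rV[C]_n.+1 := \row_l \sum_(i < n) (widen_ord (leqnSn n) i == l)%:R * k i.
have dw : forall i, d 0 (widen_ord (leqnSn n) i) = k i.
  move=> i; rewrite mxE (bigD1 i) //= eqxx mul1r big1 ?addr0 // => j hj.
  by rewrite (_ : (_ == _) = false) ?mul0r //; apply/negbTE; rewrite -val_eqE /= val_eqE.
have dm : d 0 ord_max = 0.
  rewrite mxE big1 // => j _; rewrite (_ : (_ == _) = false) ?mul0r //.
  by apply/negbTE; rewrite -val_eqE /= neq_ltn ltn_ord.
have d0 : d *m Km = 0.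
  apply/rowP => c; rewrite dK dm mul0r addr0 [RHS]mxE -[in RHS](hrow c).
  by apply: eq_bigr => i _; rewrite dw.
have : d = 0 by rewrite -(mulmxK K_unit d) d0 mul0mx.
by move=> dz i; rewrite -dw dz mxE.
Qed.

Lemma trD (A B : MT) : \tr (A + B) = \tr A + \tr B.
Proof. exact: raddfD. Qed.

Lemma span_sub X : X \in <<Bt>>%VS -> \tr X = 0 /\ X *m Mm = Mm *m X.
Proof.
move/coord_span => ->.
have -> : \sum_i coord Bt i X *: Bt`_i = \sum_i coord Bt i X *: Bf i.
  by apply: eq_bigr => i _; rewrite Bt_nth.
exact: (good_sum (fun i => coord Bt i X)).
Qed.

Lemma ker_span X : \tr X = 0 -> X *m Mm = Mm *m X -> X \in <<Bt>>%VS.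
Proof.
move=> htr hc.
have [d hdK] : exists d, d *m Km = row 0 X by exists (row 0 X *m invmx Km); rewrite mulmxKV // K_unit.
pose dd i := d 0 (widen_ord (leqnSn n) i).
have dm : d 0 ord_max = 0.
  have := congr1 (fun A : 'rV[C]_n.+1 => A 0 ord_max) hdK.
  rewrite /= dK mxE eqxx mulr1 (@cX_col X hc 0 hn).
  by rewrite big1 ?add0r // => i _; rewrite uN mulr0.
have hrow : forall c, X 0 c = \sum_i dd i * u i 0 c.
  move=> c; have := congr1 (fun A : 'rV[C]_n.+1 => A 0 c) hdK.
  by rewrite /= dK dm mul0r addr0 mxE => ->.
pose Z := X - \sum_i dd i *: Tm ^+ i.
have hZ : Z *m Mm = Mm *m Z.
  rewrite /Z mulmxBl mulmxBr hc mulmx_suml mulmx_sumr; congr (_ - _); apply: eq_bigr => i _.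
  rewrite -scalemxAl -scalemxAr; have := commrX i TMc; rewrite /GRing.comm -!mulmxE => ->.
  done.
have Zrow : forall c, Z 0 c = 0.
  move=> c; rewrite /Z [LHS]mxE [X in _ + X]mxE summxE hrow -sumrB big1 // => i _.
  by rewrite [X in _ - X]mxE uE subrr.
have Zu : forall j, (j < n)%N -> u j *m Z = 0.
  move=> j _; rewrite /u -row_mul.
  have cZ : GRing.comm Z Tm by rewrite /GRing.comm -!mulmxE (@cX_T Z hZ).
  have := commrX j cZ; rewrite /GRing.comm -!mulmxE => <-.
  by rewrite row_mul (_ : row 0 Z = 0) ?mul0mx //; apply/rowP => c; rewrite [LHS]mxE Zrow mxE.
have ZF : Z = Z ord_max ord_max *: Fm.
  apply/matrixP => i c; rewrite [RHS]mxE [Fm _ _]mxE.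
  case: (ltnP i n) => hi.
    rewrite Kry // (_ : (i == ord_max) = false) ?mulr0 //; apply/negbTE; rewrite -val_eqE /=; lia.
  have -> : i = ord_max by apply/val_inj => /=; have := ltn_ord i; lia.
  case: (ltnP c n) => hc'.
    rewrite (@cX_row Z hZ c hc') (_ : (c == ord_max) = false) ?andbF ?mulr0 //; apply/negbTE; rewrite -val_eqE /=; lia.
  have -> : c = ord_max by apply/val_inj => /=; have := ltn_ord c; lia.
  by rewrite eqxx mulr1.
have hX : X = \sum_i dd i *: Tm ^+ i + Z ord_max ord_max *: Fm by rewrite -ZF /Z addrC subrK.
have hz : Z ord_max ord_max = - \sum_i dd i * \tr (Tm ^+ i).
  move: htr; rewrite hX trD tr_sum trZ /Fm tr_delta1 mulr1.
  under eq_bigr do rewrite trZ.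
  by move/eqP; rewrite addrC addr_eq0 => /eqP.
have -> : X = \sum_i dd i *: Bf i.
  rewrite hX hz /Bf; under [RHS]eq_bigr do rewrite scalerBr scalerA.
  by rewrite sumrB scaleNr scaler_suml.
apply: memv_suml => i _; apply: memvZ; rewrite -Bt_nth; apply: memv_span; apply: mem_nth.
by rewrite size_tuple.
Qed.

Lemma main : exists V : {vspace 'M[C]_n.+1},
    (forall X : 'M[C]_n.+1, X \in V <-> kirillov_ker_sl (@F_fun C n) X) /\
    \dim V = n.
Proof.
exists <<Bt>>%VS; split.
  move=> X; rewrite ker_iff; split; first exact: span_sub.
  by case=> h1 h2; apply: ker_span.
by have := Bt_free; rewrite /free size_tuple => /eqP.
Qed.

End P.

Theorem theorem4p3 (C : numClosedFieldType) (n : nat) (hn : (1 <= n)%N) :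
  exists V : {vspace 'M[C]_n.+1},
    (forall X : 'M[C]_n.+1, X \in V <-> kirillov_ker_sl (@F_fun C n) X) /\
    \dim V = n.
Proof. exact: main. Qed.
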